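(* Let $X$ be a locally compact metrizable space that is not compact, and suppose that $\operatorname{Homeo}_{\overline U}(X)$ is not locally compact for every non-empty open set $U\subseteq X$ with $\overline U$ compact. Then the family $\{\operatorname{Homeo}_K(X)\}_{K\in\mathscr K(X)}$ does not satisfy ACP.
   Context: For a compact subset $K$ of a locally compact Hausdorff space $X$, $\operatorname{Homeo}_K(X)$ denotes the group of homeomorphisms $h$ of $X$ with $h(x)=x$ for all $x\in X\setminus K$, equipped with the compact-open topology (it is a topological group). $\mathscr K(X)$ is the set of compact subsets of $X$ ordered by inclusion, and the family has inclusions as bonding maps. For a directed family $\{G_\alpha\}$ of topological groups with inclusions that are closed embeddings as bonding maps and union $G$, the colimit space topology is $\mathscr T=\{U\subseteq G\mid U\cap G_\alpha\text{ open in }G_\alpha\ \forall\alpha\}$; the family satisfies ACP if $(G,\mathscr T)$ is a topological group (equivalently, $\mathscr T$ equals the finest group topology making all inclusions continuous). *)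

(* Defs.v *)
From HB Require Import structures.
From mathcomp Require Import all_boot all_order all_algebra.
From mathcomp Require Import all_classical all_reals all_analysis.
From Stdlib Require Reals.

Set Implicit Arguments. Unset Strict Implicit. Unset Printing Implicit Defensive.
Local Open Scope classical_set_scope.

Definition metrizable (X : topologicalType) : Prop :=
  exists d : X -> X -> Rdefinitions.R,
    (forall x y, Rdefinitions.Rle Rdefinitions.R0 (d x y)) /\
    (forall x y, d x y = Rdefinitions.R0 <-> x = y) /\
    (forall x y, d x y = d y x) /\
    (forall x y z, Rdefinitions.Rle (d x z) (Rdefinitions.Rplus (d x y) (d y z))) /\
    (forall A : set X, open A <->
       (forall x, A x -> exists e, Rdefinitions.Rlt Rdefinitions.R0 e /\ [set y | Rdefinitions.Rlt (d x y) e] `<=` A)).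

Definition is_homeo (X : topologicalType) (h : X -> X) : Prop :=
  continuous h /\ exists g : X -> X, continuous g /\ cancel h g /\ cancel g h.

Definition HomeoK (X : topologicalType) (K : set X) : set {compact-open, X -> X} :=
  [set h | is_homeo h /\ forall x, ~ K x -> h x = x].

Definition open_in (T : topologicalType) (S A : set T) : Prop :=
  exists O : set T, open O /\ A `&` S = O `&` S.

(* The subspace S is locally compact: every point of S has a compact
   neighbourhood in S (compactness of a subset is intrinsic). *)
Definition subspace_locally_compact (T : topologicalType) (S : set T) : Prop :=
  forall s, S s -> exists (O C : set T),
    [/\ open O, O s, O `&` S `<=` C, C `<=` S & compact C].

Definition HomeoC (X : topologicalType) : set {compact-open, X -> X} :=
  [set h | exists K : set X, compact K /\ HomeoK K h].

Definition colim_open (X : topologicalType) (W : set {compact-open, X -> X}) : Prop :=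
  W `<=` @HomeoC X /\
  forall K : set X, compact K -> open_in (HomeoK K) (W `&` HomeoK K).

(* ACP: (G, colimit topology) is a topological group, i.e. composition
   G x G -> G is continuous (for the product topology) and inversion is
   continuous. *)
Definition ACP (X : topologicalType) : Prop :=
  (forall W, colim_open W ->
     forall g h, @HomeoC X g -> @HomeoC X h -> W (g \o h) ->
     exists U V, [/\ colim_open U, colim_open V, U g, V h &
                   forall u v, U u -> V v -> W (u \o v)]) /\
  (forall W, colim_open W ->
     colim_open [set g | @HomeoC X g /\
        exists g' : {compact-open, X -> X}, [/\ W g', cancel g g' & cancel g' g]]).

(* Main.v *)
Require Import Defs.
From HB Require Import structures.
From mathcomp Require Import all_boot all_order all_algebra.
From mathcomp Require Import all_classical all_reals all_analysis.
From Stdlib Require Import Rdefinitions Raxioms RIneq Rbasic_fun Lra.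
Local Open Scope classical_set_scope.

Set Implicit Arguments. Unset Strict Implicit. Unset Printing Implicit Defensive.

Definition mprop (X : topologicalType) (d : X -> X -> R) : Prop :=
    (forall x y, Rdefinitions.Rle Rdefinitions.R0 (d x y)) /\
    (forall x y, d x y = Rdefinitions.R0 <-> x = y) /\
    (forall x y, d x y = d y x) /\
    (forall x y z, Rdefinitions.Rle (d x z) (Rdefinitions.Rplus (d x y) (d y z))) /\
    (forall A : set X, open A <->
       (forall x, A x -> exists e, Rdefinitions.Rlt Rdefinitions.R0 e /\ [set y | Rdefinitions.Rlt (d x y) e] `<=` A)).

Lemma metrizableE (X : topologicalType) : metrizable X -> exists d, @mprop X d.
Proof. by []. Qed.

Local Open Scope R_scope.

Lemma small_inv (e : R) : 0 < e -> exists N : nat, / (INR N + 1) < e.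
Proof.
move=> he; have [n hn] := INR_unbounded (/ e).
exists n; have h0 : 0 < INR n + 1 by have := pos_INR n; lra.
have h1 : 0 < / e by apply: Rinv_0_lt_compat.
rewrite -(Rinv_inv e); apply: Rinv_lt_contravar; first by apply: Rmult_lt_0_compat.
lra.
Qed.

Lemma inv_mono (N n : nat) : (N <= n)%nat -> / (INR n + 1) <= / (INR N + 1).
Proof.
move=> /leP h; apply: Rinv_le_contravar; first by have := pos_INR N; lra.
have := le_INR _ _ h; lra.
Qed.

Lemma inv_pos (n : nat) : 0 < / (INR n + 1).
Proof. apply: Rinv_0_lt_compat; have := pos_INR n; lra. Qed.

Section Metric.
End Metric.

Lemma ball_open (X : topologicalType) d (hd : @mprop X d) x e :
  open [set y | d x y < e].
Proof.
case: hd => [d0 [dz [dsym [dtri dopen]]]].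
apply/dopen => y /= hy; exists (e - d x y); split; first lra.
move=> z /= hz; have := dtri x y z; lra.
Qed.

Lemma nbhs_ball (X : topologicalType) d (hd : @mprop X d) x e :
  0 < e -> nbhs x [set y | d x y < e].
Proof.
move=> he; apply: open_nbhs_nbhs; split; first exact: ball_open.
case: hd => [d0 [dz _]] /=; have -> : d x x = 0 by apply/dz.
exact: he.
Qed.

Lemma nbhs_ballP (X : topologicalType) d (hd : @mprop X d) x (A : set X) :
  nbhs x A -> exists e, 0 < e /\ [set y | d x y < e] `<=` A.
Proof.
rewrite nbhsE => -[B [oB Bx] BA].
case: hd => [d0 [dz [dsym [dtri dopen]]]].
have [e [he hB]] := (proj1 (dopen B) oB x Bx).
by exists e; split => // y /hB /BA.
Qed.

Lemma open_ballP (X : topologicalType) d (hd : @mprop X d) x (A : set X) :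
  open A -> A x -> exists e, 0 < e /\ [set y | d x y < e] `<=` A.
Proof.
move=> oA Ax; apply: (nbhs_ballP hd); apply: open_nbhs_nbhs; by split.
Qed.

Lemma closed_cball (X : topologicalType) d (hd : @mprop X d) x r :
  closed [set y | d x y <= r].
Proof.
have hd' := hd; case: hd' => [d0 [dz [dsym [dtri dopen]]]].
rewrite -openC; apply/dopen => y /= hy.
have hy' : r < d x y by lra.
exists (d x y - r); split; first lra.
move=> z /= hz hxz; have := dtri x z y; rewrite (dsym z y); lra.
Qed.

Lemma closure_ball_sub (X : topologicalType) d (hd : @mprop X d) x r :
  closure [set y | d x y < r] `<=` [set y | d x y <= r].
Proof.
have -> : [set y | d x y <= r] = closure [set y | d x y <= r].
  by apply/closure_id; exact: closed_cball.
apply: closure_subset => y /=; lra.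
Qed.

Definition clus (T : topologicalType) (u : nat -> T) (p : T) :=
  forall A, nbhs p A -> forall N, exists n, (N <= n)%nat /\ A (u n).

Lemma compact_clus (T : topologicalType) (Y : set T) (u : nat -> T) :
  compact Y -> (forall n, Y (u n)) -> exists p, Y p /\ clus u p.
Proof.
move=> cY Yu.
have [p [Yp cp]] : Y `&` cluster (u @ \oo) !=set0.
  apply: cY.
  exact: (@filterE nat (nbhs \oo) _ (u @^-1` Y) Yu).
exists p; split => // A pA N.
have [_ [[n hn <-] /= An]] := cp (u @` [set n | (N <= n)%nat]) A
  (filterS (fun n (hn : (N <= n)%nat) => ex_intro2 _ _ n hn erefl) (nbhs_infty_ge N)) pA.
by exists n.
Qed.

Lemma filter_fin (T : Type) (F : set_system T) {FF : Filter F}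
  (P : nat -> T -> Prop) n :
  (forall i, (i < n)%nat -> F (P i)) -> F (fun g => forall i, (i < n)%nat -> P i g).
Proof.
elim: n => [|n IH] h.
  by apply: filterE => g i.
have h1 := IH (fun i hi => h i (ltnW hi)).
have h2 := h n (ltnSn n).
apply: filterS (filterI h1 h2) => g [g1 g2] i; rewrite ltnS leq_eqVlt.
by case/orP => [/eqP -> //|/g1].
Qed.

Fixpoint pre (T : Type) (s0 : T) (next : nat -> (nat -> T) -> T) (n : nat) : nat -> T :=
  match n with
  | 0 => fun _ => s0
  | m.+1 => fun i => if (i < m)%nat then pre s0 next m i else next m (pre s0 next m)
  end.

Lemma pre_w (T : Type) (s0 : T) next m i : (i < m)%nat ->
  pre s0 next m i = next i (pre s0 next i).
Proof.
elim: m => [//|m IH] /=; rewrite ltnS leq_eqVlt => /orP[/eqP ->|h].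
  by rewrite ltnn.
by rewrite h IH.
Qed.

Lemma cc_tb (T : topologicalType) (S : set T) (Rel : R -> T -> T -> Prop)
 (rsym : forall e f g, Rel e f g -> Rel e g f)
 (rtri : forall e e' f g h, Rel e f g -> Rel e' g h -> Rel (e + e') f h)
 (rmono : forall e e' f g, e <= e' -> Rel e f g -> Rel e' f g)
 (hb : forall s, S s -> forall e, 0 < e -> nbhs s [set g | S g -> Rel e s g])
 (hcc : forall u : nat -> T, (forall n, S (u n)) -> exists c, S c /\ clus u c)
 e s0 : 0 < e -> S s0 -> exists n (u : nat -> T), (forall i, S (u i)) /\
   forall g, S g -> exists i, (i < n)%nat /\ Rel e (u i) g.
Proof.
move=> he Ss0; apply: Classical_Prop.NNPP => hno.
have hnext : forall n (p : nat -> T), exists g, (forall i, (i < n)%nat -> S (p i)) ->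
    S g /\ forall i, (i < n)%nat -> ~ Rel e (p i) g.
  move=> n p.
  case: (Classical_Prop.classic (forall i, (i < n)%nat -> S (p i))) => hp; last by exists s0.
  apply: Classical_Prop.NNPP => hng; apply: hno.
  exists n, (fun i => if (i < n)%nat then p i else s0); split.
    by move=> i; case: ifP => // /hp.
  move=> g Sg; apply: Classical_Prop.NNPP => hc; apply: hng; exists g => _.
  split => // i hi hR; apply: hc; exists i; split => //; by rewrite hi.
have hn2 : forall n, exists f : (nat -> T) -> T, forall p,
    (forall i, (i < n)%nat -> S (p i)) -> S (f p) /\ forall i, (i < n)%nat -> ~ Rel e (p i) (f p).
  by move=> n; have [f hf] := choice (hnext n); exists f.
have [next hN] := choice hn2.
have Spre : forall n i, (i < n)%nat -> S (pre s0 next n i).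
  elim => [//|n IH] i /=; rewrite ltnS leq_eqVlt => /orP[/eqP ->|h].
    by rewrite ltnn; exact: (hN n _ IH).1.
  by rewrite h; exact: IH.
pose w n := next n (pre s0 next n).
have Sw : forall n, S (w n) by move=> n; exact: (hN n _ (Spre n)).1.
have sep : forall i n, (i < n)%nat -> ~ Rel e (w i) (w n).
  move=> i n hi; have := (hN n _ (Spre n)).2 i hi.
  by rewrite (pre_w s0 next hi).
have [c [Sc cc]] := hcc w Sw.
have he2 : 0 < e / 2 by lra.
have Q := hb c Sc (e / 2) he2.
have [j [_ Qj]] := cc _ Q 0%nat.
have [k [hk Qk]] := cc _ Q j.+1.
apply: (sep j k hk).
apply: (rmono (e / 2 + e / 2)); first lra.
have h1 : Rel (e/2) c (w j) by exact: Qj. have h2 : Rel (e/2) c (w k) by exact: Qk. exact: (rtri _ _ _ _ _ (rsym _ _ _ h1) h2).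
Qed.

Lemma cc_compact (T : topologicalType) (S : set T) (Rel : R -> T -> T -> Prop)
 (rsym : forall e f g, Rel e f g -> Rel e g f)
 (rtri : forall e e' f g h, Rel e f g -> Rel e' g h -> Rel (e + e') f h)
 (rmono : forall e e' f g, e <= e' -> Rel e f g -> Rel e' f g)
 (ha : forall s, S s -> forall A, nbhs s A ->
    exists e, 0 < e /\ forall g, S g -> Rel e s g -> A g)
 (hb : forall s, S s -> forall e, 0 < e -> nbhs s [set g | S g -> Rel e s g])
 (hcc : forall u : nat -> T, (forall n, S (u n)) -> exists c, S c /\ clus u c) :
 compact S.
Proof.
move=> F PF FS.
have [s0 Ss0] := filter_ex FS.
have hpos : forall k : nat, exists c, S c /\ forall A, F A ->
    exists g, A g /\ S g /\ Rel (/ (INR k + 1)) c g.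
  move=> k.
  have [n [u [Su cov]]] := cc_tb rsym rtri rmono hb hcc (inv_pos k) Ss0.
  apply: Classical_Prop.NNPP => hno.
  have hA : forall i, (i < n)%nat ->
      F (fun g => S g -> ~ Rel (/ (INR k + 1)) (u i) g).
    move=> i hi; apply: Classical_Prop.NNPP => hF; apply: hno.
    exists (u i); split => // A FA; apply: Classical_Prop.NNPP => hg; apply: hF.
    apply: filterS FA => g Ag Sg hR; apply: hg; by exists g.
  have [g [Sg hg]] := filter_ex (filterI FS (filter_fin hA)).
  have [i [hi hR]] := cov g Sg.
  exact: (hg i hi Sg hR).
have [c hc] := choice hpos.
have [p [Sp cp]] := hcc c (fun k => (hc k).1).
exists p; split => // A B FA pB.
have [eps [heps hB]] := ha p Sp B pB.
have heps2 : 0 < eps / 2 by lra.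
have Q := hb p Sp (eps / 2) heps2.
have [N hN] := small_inv heps2.
have [k [hk Qk]] := cp _ Q N.
have [g [Ag [Sg Rg]]] := (hc k).2 A FA.
exists g; split => //; apply: hB => //.
apply: (rmono (eps / 2 + / (INR k + 1))).
  have := inv_mono hk; lra.
exact: (rtri _ _ _ _ _ (Qk (hc k).1) Rg).
Qed.

Lemma eps_nbhd (X : topologicalType) d (hd : @mprop X d) (Y O : set X) :
  compact Y -> open O -> Y `<=` O ->
  exists e, 0 < e /\ forall y z, Y y -> d y z < e -> O z.
Proof.
have hd' := hd; case: hd' => [d0 [dz [dsym [dtri dopen]]]].
move=> cY oO YO; apply: Classical_Prop.NNPP => hno.
have h : forall n : nat, exists yz : X * X,
    Y yz.1 /\ d yz.1 yz.2 < / (INR n + 1) /\ ~ O yz.2.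
  move=> n; apply: Classical_Prop.NNPP => hn; apply: hno.
  exists (/ (INR n + 1)); split; first exact: inv_pos.
  move=> y z Yy dyz; apply: Classical_Prop.NNPP => nO; apply: hn.
  by exists (y, z).
have [yz hyz] := choice h.
have [p [Yp cp]] := compact_clus cY (fun n => (hyz n).1).
have [del [hdel hball]] := open_ballP hd oO (YO p Yp).
have hdel2 : 0 < del / 2 by lra.
have [N hN] := small_inv hdel2.
have [n [hn hpn]] := cp _ (nbhs_ball hd p hdel2) N.
case: (hyz n) => _ [h1 h2]; apply: h2; apply: hball => /=.
have := dtri p (yz n).1 (yz n).2; have := inv_mono hn; move: hpn => /= hpn; lra.
Qed.

Lemma unif_nbhs (X : topologicalType) d (hd : @mprop X d)
  (s : {compact-open, X -> X}) : continuous (s : X -> X) ->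
  forall A, nbhs s A -> exists e, 0 < e /\
    forall g : {compact-open, X -> X}, (forall x, d (s x) (g x) < e) -> A g.
Proof.
move=> cs.
pose G := filter_from [set e | 0 < e]
  (fun e => [set g : {compact-open, X -> X} | forall x, d (s x) (g x) < e]).
have GF : Filter G.
  apply: filter_from_filter; first by exists 1; rewrite /=; lra.
  move=> e1 e2 h1 h2; exists (Rmin e1 e2); first exact: Rmin_glb_lt.
  move=> g hg; split => x /=; have := hg x; have := Rmin_l e1 e2;
    have := Rmin_r e1 e2; lra.
have Gs : G --> s.
  apply/compact_open_cvgP => K O cK oO sKO.
  have [e [he hO]] := eps_nbhd hd (continuous_compact (@continuous_subspaceT _ _ K _ cs) cK) oO sKO.
  exists e => // g hg _ [x Kx <-]; apply: (hO (s x)); [by exists x | exact: hg].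
move=> A sA; have [e he hA] := Gs A sA.
by exists e; split.
Qed.

Lemma ev_nbhs (X : topologicalType) d (hd : @mprop X d)
  (f : {compact-open, X -> X}) x del : 0 < del ->
  nbhs f [set g : {compact-open, X -> X} | d (f x) (g x) < del].
Proof.
move=> hdel.
have hd' := hd; case: hd' => [d0 [dz [dsym [dtri dopen]]]].
have oS := compact_open_open (@compact_set1 _ x) (ball_open hd (f x) del).
apply: filterS (open_nbhs_nbhs (conj oS _)).
  by move=> g hg; apply: (hg (g x)); exists x.
move=> _ [y -> <-] /=; have -> : d (f x) (f x) = 0 by apply/dz.
exact: hdel.
Qed.

Lemma t1_nbhs (X : topologicalType) d (hd : @mprop X d)
  (f h : {compact-open, X -> X}) : f <> h -> nbhs f (fun g => g <> h).
Proof.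
have hd' := hd; case: hd' => [d0 [dz [dsym [dtri dopen]]]].
move=> fh.
have [x hx] : exists x, f x <> h x.
  apply: Classical_Prop.NNPP => hn; apply: fh; apply: funext => x.
  by apply: Classical_Prop.NNPP => hx; apply: hn; exists x.
have hpos : 0 < d (f x) (h x).
  have := d0 (f x) (h x); have : d (f x) (h x) <> 0 by move=> /dz.
  move=> ? ?; lra.
apply: filterS (ev_nbhs hd f x hpos) => g /= hg gh.
by move: hg; rewrite gh; lra.
Qed.

Lemma loc_unif (X : topologicalType) d (hd : @mprop X d)
  (s : {compact-open, X -> X}) (C : set X) :
  continuous (s : X -> X) -> compact C -> (forall x, ~ C x -> s x = x) ->
  forall e, 0 < e -> nbhs s [set g : {compact-open, X -> X} |
    (forall x, ~ C x -> g x = x) -> forall x, d (s x) (g x) < e].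
Proof.
have hd' := hd; case: hd' => [d0 [dz [dsym [dtri dopen]]]].
move=> cs cC sC e he; apply: Classical_Prop.NNPP => hno.
pose img (B : set {compact-open, X -> X}) := [set x | exists g : {compact-open, X -> X},
  B g /\ (forall y, ~ C y -> g y = y) /\ C x /\ e <= d (s x) (g x)].
pose P := filter_from [set B | nbhs s B] img.
have PF : Filter P.
  apply: filter_from_filter; first by exists setT; exact: filterT.
  move=> B1 B2 h1 h2; exists (B1 `&` B2); first exact: filterI.
  by move=> x [g [[g1 g2] [gf [Cx hx]]]]; split; exists g.
have PP : ProperFilter P.
  apply: filter_from_proper => B sB.
  have [g [Bg ng]] : exists g, B g /\ ~ ((forall x, ~ C x -> g x = x) ->
      forall x, d (s x) (g x) < e).
    apply: Classical_Prop.NNPP => hn; apply: hno; apply: filterS sB => g Bg.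
    by apply: Classical_Prop.NNPP => ng; apply: hn; exists g.
  have [gf [x hx]] : (forall x, ~ C x -> g x = x) /\ exists x, ~ d (s x) (g x) < e.
    split.
      by apply: Classical_Prop.NNPP => hf; apply: ng => hf'; exfalso; exact: hf.
    apply: Classical_Prop.NNPP => hf; apply: ng => _ x.
    by apply: Classical_Prop.NNPP => hx; apply: hf; exists x.
  have Cx : C x.
    apply: Classical_Prop.NNPP => nCx; apply: hx; rewrite (gf x nCx) (sC x nCx).
    by have -> : d x x = 0 by apply/dz.
  exists x; exists g; split => //; split => //; split => //; lra.
have PC : P C by exists setT; [exact: filterT | by move=> x [g [_ [_ [Cx _]]]]].
have [z [Cz cz]] := cC P PP PC.
have he3 : 0 < e / 3 by lra.
have := cs z _ (nbhs_ball hd (s z) he3) => /= hz.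
have [del [hdel hball]] := nbhs_ballP hd hz.
have hdel2 : 0 < del / 2 by lra.
pose K0 := C `&` [set y | d z y <= del / 2].
have cK0 : compact K0 by apply: compact_closedI => //; exact: closed_cball.
pose B0 := [set g : {compact-open, X -> X} | g @` K0 `<=` [set y | d (s z) y < e / 3]].
have nB0 : nbhs s B0.
  apply: open_nbhs_nbhs; split; first exact: compact_open_open cK0 (ball_open hd _ _).
  move=> _ [y [Cy hy] <-]; apply: hball => /=; move: hy => /= hy; lra.
have PY0 : P (img B0) by exists B0.
have [x [[g [B0g [gf [Cx hx]]]] /= hzx]] := cz _ _ PY0 (nbhs_ball hd z hdel2).
have h1 : d (s z) (g x) < e / 3.
  by apply: B0g; exists x => //; split => //=; move: hzx => /= hzx; lra.
have h2 : d (s z) (s x) < e / 3 by apply: hball => /=; move: hzx => /= hzx; lra.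
have := dtri (s x) (s z) (g x); rewrite (dsym (s x) (s z)); lra.
Qed.

Lemma lcomp_cont (X : topologicalType) (s : X -> X) : continuous s ->
  continuous (fun f : {compact-open, X -> X} => (s \o f : {compact-open, X -> X})).
Proof.
move=> cs f.
have FF : Filter ((fun g : {compact-open, X -> X} => (s \o g : {compact-open, X -> X})) @ f).
  exact: (@fmap_filter _ _ _ _ (@nbhs_filter {compact-open, X -> X} f)).
apply/(compact_open_cvgP _ FF) => K O cK oO sfKO.
have oO2 : open (s @^-1` O) by apply: open_comp => // x _; exact: cs.
apply: filterS (open_nbhs_nbhs (conj (compact_open_open cK oO2) _)).
  by move=> h hK _ [y Ky <-]; apply: (hK (h y)); exists y.
by move=> _ [y Ky <-]; apply: (sfKO (s (f y))); exists y.
Qed.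

Definition idf (X : topologicalType) : {compact-open, X -> X} := fun x => x.
Arguments idf : clear implicits.

Lemma HK_cont (X : topologicalType) (C : set X) (s : {compact-open, X -> X}) :
  HomeoK C s -> continuous (s : X -> X).
Proof. by case=> [[cs _] _]. Qed.

Lemma HK_fix (X : topologicalType) (C : set X) (s : {compact-open, X -> X}) :
  HomeoK C s -> forall x, ~ C x -> s x = x.
Proof. by case. Qed.

Lemma HK_id (X : topologicalType) (C : set X) : HomeoK C (idf X).
Proof.
split=> //; split; first by move=> x; exact: cvg_id.
by exists (fun x => x); split => //; move=> x; exact: cvg_id.
Qed.

Lemma HK_comp (X : topologicalType) (C : set X) (s t : {compact-open, X -> X}) :
  HomeoK C s -> HomeoK C t -> HomeoK C (s \o t).
Proof.
move=> [[cs [gs [cgs [s1 s2]]]] fs] [[ct [gt [cgt [t1 t2]]]] ft].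
split; last by move=> x nx /=; rewrite (ft x nx) (fs x nx).
split; first by move=> x; apply: continuous_comp; [exact: ct|exact: cs].
exists (gt \o gs); split.
  by move=> x; apply: continuous_comp; [exact: cgs|exact: cgt].
by split => x /=; [rewrite s1 t1 | rewrite t2 s2].
Qed.

Lemma HK_inv (X : topologicalType) (C : set X) (s : {compact-open, X -> X}) :
  HomeoK C s -> exists t : {compact-open, X -> X},
    HomeoK C t /\ cancel s t /\ cancel t s.
Proof.
move=> [[cs [gs [cgs [s1 s2]]]] fs].
exists gs; split => //; split; last by move=> x nx; rewrite -{1}(fs x nx) s1.
by split => //; exists s.
Qed.

Lemma HK_supp (X : topologicalType) (C : set X) (s : {compact-open, X -> X}) x :
  HomeoK C s -> s x <> x -> C x /\ C (s x).
Proof.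
move=> [[cs [gs [cgs [s1 s2]]]] fs] hx; split.
  by apply: Classical_Prop.NNPP => nx; apply: hx; exact: fs.
apply: Classical_Prop.NNPP => nx; apply: hx.
have := fs _ nx => h; have := congr1 gs h; rewrite !s1 => ->.
done.
Qed.

Lemma homog (X : topologicalType) (C : set X) (O C1 : set {compact-open, X -> X}) :
  open O -> O (idf X) -> O `&` HomeoK C `<=` C1 -> C1 `<=` HomeoK C -> compact C1 ->
  subspace_locally_compact (HomeoK C).
Proof.
move=> oO Oid OC1 C1H cC1 s Hs.
have [t [Ht [st ts]]] := HK_inv Hs.
pose Lt := fun f : {compact-open, X -> X} => (t \o f : {compact-open, X -> X}).
pose Ls := fun f : {compact-open, X -> X} => (s \o f : {compact-open, X -> X}).
have cLt : continuous Lt := lcomp_cont (HK_cont Ht).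
have cLs : continuous Ls := lcomp_cont (HK_cont Hs).
exists (Lt @^-1` O), (Ls @` C1); split.
- by apply: open_comp => // f _; exact: cLt.
- rewrite /= /Lt.
  have -> : (t \o s : {compact-open, X -> X}) = idf X by apply: funext => x /=; rewrite st.
  done.
- move=> f [Of Hf]; exists (t \o f); last by apply: funext => x /=; rewrite /Ls /= ts.
  by apply: OC1; split => //; exact: HK_comp.
- by move=> _ [c C1c <-]; apply: HK_comp => //; exact: C1H.
- apply: continuous_compact => //; exact: continuous_subspaceT.
Qed.

Lemma transfer (X : topologicalType) d (hd : @mprop X d) (C0 C1 : set X)
  (disj : forall x, C1 x -> ~ C0 x) (a b : nat -> {compact-open, X -> X})
  (f : {compact-open, X -> X}) :
  (forall j, HomeoK C0 (a j)) -> (forall j, HomeoK C1 (b j)) ->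
  (forall j x, d x (b j x) < / (INR j + 1)) -> is_homeo f ->
  clus (fun j => (a j \o b j : {compact-open, X -> X})) f ->
  HomeoK C0 f /\ clus a f.
Proof.
have hd' := hd; case: hd' => [d0 [dz [dsym [dtri dopen]]]].
move=> Ha Hb hbd hf cl.
have eb : forall j x, ~ C0 x -> (a j \o b j) x = b j x.
  move=> j x nx /=; case: (Classical_Prop.classic (b j x = x)) => hb.
    by rewrite /= hb; exact: (HK_fix (Ha j) nx).
  have [_ C1bx] := HK_supp (Hb j) hb.
  exact: (HK_fix (Ha j) (disj _ C1bx)).
have ffix : forall x, ~ C0 x -> f x = x.
  move=> x nx; apply: Classical_Prop.NNPP => hfx.
  have hpos : 0 < d x (f x).
    have := d0 x (f x); have : d x (f x) <> 0 by move=> /dz h; apply: hfx.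
    move=> ? ?; lra.
  have hdel2 : 0 < d x (f x) / 2 by lra.
  have [N hN] := small_inv hdel2.
  have [j [hj hdj]] := cl _ (ev_nbhs hd f x hdel2) N.
  move: hdj => /=; rewrite -/((a j \o b j) x) (eb j x nx) => hdj.
  have := hbd j x; have := inv_mono hj; have := dtri x (b j x) (f x).
  rewrite (dsym (b j x) (f x)); lra.
split; first by split.
pose J := filter_from [set AN : set {compact-open, X -> X} * nat | nbhs f AN.1]
  (fun AN => [set j | (AN.2 <= j)%nat /\ AN.1 (a j \o b j)]).
have JF : Filter J.
  apply: filter_from_filter; first by exists (setT, 0%nat); exact: filterT.
  move=> [A1 N1] [A2 N2] /= h1 h2; exists (A1 `&` A2, maxn N1 N2); first exact: filterI.
  move=> j /= [hj [g1 g2]]; split; split => //.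
    exact: leq_trans (leq_maxl N1 N2) hj.
  exact: leq_trans (leq_maxr N1 N2) hj.
have JP : ProperFilter J.
  apply: filter_from_proper => [[A N]] /= hA.
  have [j [hj Aj]] := cl A hA N; by exists j.
have ecv : (fun j => (a j \o b j : {compact-open, X -> X})) @ J --> f.
  by move=> A hA; exists (A, 0%nat) => // j [_ h].
have key : forall j (K : set X) (O : set X), f @` K `<=` O ->
    (a j \o b j) @` K `<=` O -> a j @` K `<=` O.
  move=> j K O fKO eKO _ [y Ky <-].
  case: (Classical_Prop.classic (C1 y)) => hy.
    rewrite (HK_fix (Ha j) (disj y hy)).
    by have := fKO (f y) (ex_intro2 _ _ y Ky erefl); rewrite ffix //; exact: disj.
  have e1 : a j y = (a j \o b j) y by rewrite /= (HK_fix (Hb j) hy).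
  by rewrite e1; apply: eKO; exists y.
have EF := @fmap_filter _ _ (fun j => (a j \o b j : {compact-open, X -> X})) J JF.
have AF := @fmap_filter _ _ a J JF.
have acv : a @ J --> f.
  apply/(compact_open_cvgP _ AF) => K O cK oO fKO.
  have := (proj1 (compact_open_cvgP _ EF) ecv) K O cK oO fKO.
  by move=> h; exact: (@filterS _ J JF _ _ (fun j => key j K O fKO) h).
move=> A hA N.
have h1 := acv A hA.
have h2 : J [set j | (N <= j)%nat].
  by exists (setT, N); [exact: filterT | move=> j /= []].
have [j [hj1 hj2]] := filter_ex (filterI h2 h1).
by exists j.
Qed.

Unset Implicit Arguments.

Theorem theoremC (X : topologicalType) :
  hausdorff_space X ->
  locally_compact [set: X] ->
  metrizable X ->
  ~ compact [set: X] ->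
  (forall U : set X, open U -> U !=set0 -> compact (closure U) ->
     ~ subspace_locally_compact (HomeoK (closure U))) ->
  ~ ACP X.
Proof.
move=> _ lcX /metrizableE [d hd] ncX h5 [acp1 _].
have hd' := hd; case: hd' => [d0 [dz [dsym [dtri dopen]]]].
have dxx : forall x, d x x = 0 by move=> x; apply/dz.
have [xs hxs] : exists xs : nat -> X, forall c, ~ clus xs c.
  apply: Classical_Prop.NNPP => hno; apply: ncX.
  apply: (@cc_compact X setT (fun e x y => d x y < e)).
  - by move=> e f g; rewrite dsym.
  - by move=> e e' f g h h1 h2; have := dtri f g h; lra.
  - by move=> e e' f g; lra.
  - move=> s _ A sA; have [e [he hA]] := nbhs_ballP hd sA.
    by exists e; split => // g _ hg; exact: hA.
  - by move=> s _ e he; apply: filterS (nbhs_ball hd s he) => g hg _.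
  - move=> u _; apply: Classical_Prop.NNPP => hn; apply: hno; exists u => c hc.
    by apply: hn; exists c.
have hrho : forall x, exists r, 0 < r /\ compact (closure [set y | d x y < r]).
  move=> x; have [U hU [cU clU]] := lcX x I.
  have nU : nbhs x U.
    move: hU; rewrite /within /=; rewrite /prop_near1 /=. apply: filterS => y. by apply.
  have [r [hr hb]] := nbhs_ballP hd nU.
  exists r; split => //.
  refine (subclosed_compact (@closed_closure X [set y | d x y < r]) cU _).
  rewrite (proj1 (closure_id U) clU); exact: closure_subset hb.
have [rho hrho'] := choice hrho.
have cball_small : forall x r, r <= rho x -> compact (closure [set y | d x y < r]).
  move=> x r hr; refine (subclosed_compact (@closed_closure X [set y | d x y < r]) (hrho' x).2 _).
  by apply: closure_subset => y /=; lra.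
have [del0 [hdel0 [N0 hN0]]] : exists del, 0 < del /\
    exists N, forall n, (N <= n)%nat -> del <= d (xs 0%nat) (xs n).
  apply: Classical_Prop.NNPP => hno; apply: (hxs (xs 0%nat)) => A hA N.
  have [e [he hball]] := nbhs_ballP hd hA.
  apply: Classical_Prop.NNPP => hn; apply: hno; exists e; split => //.
  exists N => n hn'; apply: Rnot_lt_le => hlt; apply: hn; exists n; split => //.
  exact: hball.
pose c0 := xs 0%nat.
pose r0 := Rmin (rho c0) (del0 / 3).
pose ck (k : nat) := xs (N0 + k)%nat.
pose rk (k : nat) := Rmin (rho (ck k)) (Rmin (del0 / 3) (/ (INR k + 1))).
have hr0 : 0 < r0 by apply: Rmin_glb_lt; [exact: (hrho' c0).1 | lra].
have hrk : forall k, 0 < rk k.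
  move=> k; apply: Rmin_glb_lt; first exact: (hrho' (ck k)).1.
  apply: Rmin_glb_lt; [lra | exact: inv_pos].
pose U0 := [set y | d c0 y < r0].
pose Uk k := [set y | d (ck k) y < rk k].
pose C0 := closure U0.
pose Ck k := closure (Uk k).
have cC0 : compact C0 by apply: cball_small; exact: Rmin_l.
have cCk : forall k, compact (Ck k) by move=> k; apply: cball_small; exact: Rmin_l.
have C0b : forall x, C0 x -> d c0 x <= del0 / 3.
  move=> x /(closure_ball_sub hd) /= h; have := Rmin_r (rho c0) (del0 / 3); rewrite /r0 in h; lra.
have Ckb : forall k x, Ck k x -> d (ck k) x <= del0 / 3 /\ d (ck k) x <= / (INR k + 1).
  move=> k x /(closure_ball_sub hd) /= h.
  have := Rmin_r (rho (ck k)) (Rmin (del0 / 3) (/ (INR k + 1))).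
  have := Rmin_l (del0 / 3) (/ (INR k + 1)); have := Rmin_r (del0 / 3) (/ (INR k + 1)).
  rewrite /rk in h; lra.
have disj : forall k x, Ck k x -> ~ C0 x.
  move=> k x hk h0; have := C0b x h0; have := (Ckb k x hk).1.
  have := hN0 (N0 + k)%nat (leq_addr k N0); have := dtri c0 x (ck k).
  rewrite (dsym x (ck k)) -/c0 -/(ck k); lra.
have nlc0 : ~ subspace_locally_compact (HomeoK C0).
  have ne : U0 !=set0 by exists c0; rewrite /U0 /= dxx.
  exact: (h5 U0 (ball_open hd c0 r0) ne cC0).
have nlck : forall k, ~ subspace_locally_compact (HomeoK (Ck k)).
  move=> k; have ne : Uk k !=set0 by exists (ck k); rewrite /Uk /= dxx.
  exact: (h5 (Uk k) (ball_open hd (ck k) (rk k)) ne (cCk k)).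
have locfin : forall K, compact K -> exists M, forall k x, (M <= k)%nat -> K x -> Ck k x -> False.
  move=> K cK; apply: Classical_Prop.NNPP => hno.
  have h : forall M, exists ky : nat * X, (M <= ky.1)%nat /\ K ky.2 /\ Ck ky.1 ky.2.
    move=> M; apply: Classical_Prop.NNPP => hn; apply: hno; exists M => k1 x1 hk1 Kx1 Cx1.
    by apply: hn; exists (k1, x1).
  have [ky hky] := choice h.
  have [p [Kp cp]] := compact_clus cK (fun M => (hky M).2.1).
  apply: (hxs p) => A hA N.
  have [e [he hball]] := nbhs_ballP hd hA.
  have he2 : 0 < e / 2 by lra.
  have [N1 hN1] := small_inv he2.
  have [M [hM dp]] := cp _ (nbhs_ball hd p he2) (maxn N N1).
  have hk1 := (hky M).1.
  exists (N0 + (ky M).1)%nat; split.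
    apply: leq_trans (leq_maxl N N1) _; apply: leq_trans hM _.
    by apply: leq_trans hk1 _; exact: leq_addl.
  apply: hball => /=.
  have hN1k : (N1 <= (ky M).1)%nat.
    by apply: leq_trans (leq_maxr N N1) _; apply: leq_trans hM _.
  have := (Ckb _ _ (hky M).2.2).2; have := inv_mono hN1k.
  have := dtri p (ky M).2 (ck (ky M).1); rewrite (dsym (ky M).2 (ck (ky M).1)).
  move: dp => /= dp; rewrite /ck; lra.
have ha : forall k : nat, exists a : nat -> {compact-open, X -> X},
    (forall j, HomeoK C0 (a j) /\ forall x, d x (a j x) <= / (INR k + 1)) /\
    forall c, HomeoK C0 c -> ~ clus a c.
  move=> k; pose r := / (INR k + 1).
  pose S := [set g : {compact-open, X -> X} | HomeoK C0 g /\ forall x, d x (g x) <= r].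
  apply: Classical_Prop.NNPP => hno; apply: nlc0.
  have cS : compact S.
    apply: (@cc_compact _ S (fun e (f g : {compact-open, X -> X}) => forall x, d (f x) (g x) < e)).
    - by move=> e f g h x; rewrite dsym; exact: h.
    - by move=> e e' f g h h1 h2 x; have := dtri (f x) (g x) (h x); have := h1 x; have := h2 x; lra.
    - by move=> e e' f g hle h x; have := h x; lra.
    - move=> s [Hs _] A sA; have [e [he hA]] := unif_nbhs hd (HK_cont Hs) sA.
      by exists e; split => // g _; exact: hA.
    - move=> s [Hs _] e he.
      apply: filterS (loc_unif hd (HK_cont Hs) cC0 (HK_fix Hs) he) => g hg [Hg _].
      exact: hg (HK_fix Hg).
    - move=> u Su; apply: Classical_Prop.NNPP => hn; apply: hno.
      exists u; split; first by move=> j; exact: Su.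
      move=> c Hc cc; apply: hn; exists c; split => //; split => // x.
      apply: Rnot_lt_le => hlt.
      have hdel : 0 < d x (c x) - r by lra.
      have [j [_ hj]] := cc _ (ev_nbhs hd c x hdel) 0%nat.
      have := (Su j).2 x; have := dtri x (u j x) (c x); move: hj => /= hj.
      rewrite (dsym (u j x) (c x)); lra.
  have hid : nbhs (idf X) [set g : {compact-open, X -> X} |
      (forall x, ~ C0 x -> g x = x) -> forall x, d (idf X x) (g x) < r].
    apply: (loc_unif hd _ cC0) => //; last exact: inv_pos.
    by move=> x; exact: cvg_id.
  move: hid; rewrite nbhsE => -[B [oB Bid] hB].
  apply: (homog oB Bid _ _ cS).
    move=> g [Bg Hg]; split => // x; have := hB g Bg (HK_fix Hg) x; rewrite /idf /=; lra.
  by move=> g [].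
have hb : forall k j : nat, exists b : {compact-open, X -> X},
    HomeoK (Ck k) b /\ b <> idf X /\ forall x, d x (b x) < / (INR j + 1).
  move=> k j; apply: Classical_Prop.NNPP => hno; apply: (nlck k).
  have hid : nbhs (idf X) [set g : {compact-open, X -> X} |
      (forall x, ~ Ck k x -> g x = x) -> forall x, d (idf X x) (g x) < / (INR j + 1)].
    apply: (loc_unif hd _ (cCk k)) => //; last exact: inv_pos.
    by move=> x; exact: cvg_id.
  move: hid; rewrite nbhsE => -[B [oB Bid] hB].
  apply: (homog oB Bid _ _ (@compact_set1 _ (idf X))).
    move=> g [Bg Hg] /=; apply: Classical_Prop.NNPP => ne; apply: hno.
    by exists g; split => //; split => //; exact: (hB g Bg (HK_fix Hg)).
  by move=> g ->; exact: HK_id.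
have [a hA] := choice ha.
have hb2 : forall k, exists bk : nat -> {compact-open, X -> X}, forall j,
    HomeoK (Ck k) (bk j) /\ bk j <> idf X /\ forall x, d x (bk j x) < / (INR j + 1).
  by move=> k; have [f hf] := choice (hb k); exists f.
have [b hB] := choice hb2.
pose e (k j : nat) := (a k j \o b k j : {compact-open, X -> X}).
have F1 : forall k j, exists x, Ck k x /\ e k j x <> x.
  move=> k j.
  have [x hx] : exists x, b k j x <> x.
    apply: Classical_Prop.NNPP => hn; apply: (hB k j).2.1; apply: funext => x.
    by apply: Classical_Prop.NNPP => hx; apply: hn; exists x.
  have [Cx Cbx] := HK_supp (hB k j).1 hx.
  exists x; split => //; rewrite /e /=.
  by rewrite (HK_fix ((hA k).1 j).1 (disj _ _ Cbx)).
pose E := [set f : {compact-open, X -> X} | exists k j, f = e k j].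
pose W := [set f : {compact-open, X -> X} | HomeoC f /\ ~ E f].
have cW : colim_open W.
  split; first by move=> f [].
  move=> K cK.
  exists (~` closure (E `&` HomeoK K)); split; first by rewrite openC; exact: closed_closure.
  apply/seteqP; split => f.
    move=> [[[hCf nEf] Tf] _]; split => //.
    have [M hM] := locfin K cK.
    have kM : forall k j, HomeoK K (e k j) -> (k < M)%nat.
      move=> k j Te; rewrite ltnNge; apply/negP => hk.
      have [x [Cx ex]] := F1 k j.
      apply: (hM k x hk _ Cx); apply: Classical_Prop.NNPP => nK; apply: ex.
      exact: (HK_fix Te nK).
    have nb : nbhs f (fun g => forall k, (k < M)%nat -> forall j, g <> e k j).
      apply: filter_fin => k hk.
      have nc : ~ clus (e k) f.
        move=> cl; have [H0f cla] := transfer hd (@disj k) (fun j => ((hA k).1 j).1)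
          (fun j => (hB k j).1) (fun j => (hB k j).2.2) Tf.1 cl.
        exact: (hA k).2 f H0f cla.
      have [A [N [hA' hN]]] : exists A N, nbhs f A /\ forall n, (N <= n)%nat -> ~ A (e k n).
        apply: Classical_Prop.NNPP => hn; apply: nc => A hA' N.
        apply: Classical_Prop.NNPP => hm; apply: hn; exists A, N; split => // n hn' An.
        by apply: hm; exists n.
      have fin : nbhs f (fun g => forall j, (j < N)%nat -> g <> e k j).
        apply: filter_fin => j _; apply: (t1_nbhs hd).
        by move=> fe; apply: nEf; exists k, j.
      apply: filterS (filterI hA' fin) => g [Ag hg] j.
      case: (ltnP j N) => hj; first exact: hg j hj.
      by move=> gj; apply: (hN j hj); rewrite -gj.
    move=> cl; have [g [[[k [j ->]] Tg] hg]] := cl _ nb.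
    exact: (hg k (kM k j Tg) j erefl).
  move=> [h1 Tf]; split => //; split => //; split; first by exists K.
  move=> Ef; apply: h1; apply: subset_closure; by split.
have hCid : HomeoC (idf X) by exists set0; split; [exact: compact0 | exact: HK_id].
have Wid : W (idf X \o idf X).
  split => // -[k [j hk]].
  have [x [_ hx]] := F1 k j; apply: hx; by rewrite -hk.
have [U [V [cU cV Uid Vid hUV]]] := acp1 W cW (idf X) (idf X) hCid hCid Wid.
have cid : continuous (idf X : X -> X) by move=> x; exact: cvg_id.
have [Q1 [oO eqO]] := cU.2 C0 cC0.
have OC0id : (Q1 `&` HomeoK C0) (idf X).
  by rewrite -eqO; split; [split; [exact: Uid | exact: HK_id] | exact: HK_id].
have [eps [heps hO]] := unif_nbhs hd cid (open_nbhs_nbhs (conj oO OC0id.1)).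
have [k hk] := small_inv heps.
have [Q2 [oQ2 eqQ2]] := cV.2 (Ck k) (cCk k).
have OCkid : (Q2 `&` HomeoK (Ck k)) (idf X).
  by rewrite -eqQ2; split; [split; [exact: Vid | exact: HK_id] | exact: HK_id].
have [eps' [heps' hQ2]] := unif_nbhs hd cid (open_nbhs_nbhs (conj oQ2 OCkid.1)).
have [j hj] := small_inv heps'.
have Uu : U (a k j).
  have : (Q1 `&` HomeoK C0) (a k j).
    split; last exact: ((hA k).1 j).1.
    by apply: hO => x; have := ((hA k).1 j).2 x; rewrite /idf /=; lra.
  by rewrite -eqO => -[[]].
have Vv : V (b k j).
  have : (Q2 `&` HomeoK (Ck k)) (b k j).
    split; last exact: (hB k j).1.
    by apply: hQ2 => x; have := (hB k j).2.2 x; rewrite /idf /=; lra.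
  by rewrite -eqQ2 => -[[]].
have [_ nE] := hUV _ _ Uu Vv.
by apply: nE; exists k, j.
Qed.
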